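(* Let $z\in\mathbb{C}^n$ have unit-modulus entries, let $W\in\mathbb{C}^{n\times n}$ be Hermitian and $z$-discordant (i.e., $\|W\|_{\mathrm{op}} \leq 3\sqrt{n}$ and $\|Wz\|_\infty \leq 3\sqrt{n\log n}$), and let $C = zz^* + \sigma W$. Let $x\in\mathbb{C}^n$ satisfy $\|x\|_2^2 = n$ and $z^*Cz \leq x^*Cx$ (e.g., $x$ a global optimizer of $\max x^*Cx$ subject to $|x_1|=\cdots=|x_n|=1$), with global phase chosen so that $z^*x = |z^*x|$. The $\ell_2$ error bound $\|x-z\|_2 \leq 12\sigma$ (obtained by expanding $z^*Cz \leq x^*Cx$, dividing $n^2-|z^*x|^2 \leq \sigma(x^*Wx - z^*Wz)$ by $n+|z^*x| \geq n$, and using $x^*Wx - z^*Wz \leq \|x-z\|_2\|W\|_{\mathrm{op}}\|x+z\|_2$) can be bootstrapped to reduce the constant: assuming $\|x-z\|_2 \leq \alpha\sigma$ and $\sigma \leq t\sqrt{n}$, one obtains $\|x-z\|_2 \leq \alpha_k\sigma$ for all $k$, with $\alpha_0 = 12$ and $\alpha_{k+1} = 6 + (t/2)^2\alpha_k^3$. For $t < 1/(6\sqrt{2})$ small enough, $\alpha_k$ converges arbitrarily close to $6$. For example, if $\sigma \leq \sqrt{n}/12$, then $\|x-z\|_2 \leq 6.5\sigma$.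
   Context: Angular synchronization: measurements $C = zz^*+\sigma W$ of relative phases; the maximum likelihood estimator solves $\max_{x} x^*Cx$ subject to $|x_i|=1$ for all $i$. The basic bound $\|x-z\|_2\leq 12\sigma$ is pessimistic because it uses $n+|z^*x|\geq n$ although $n+|z^*x|$ is closer to $2n$. *)

(* Defs.v *)
From HB Require Import structures.
From mathcomp Require Import all_boot all_order all_algebra.
From mathcomp Require Import complex.
From mathcomp Require Import reals exp.
Set Implicit Arguments. Unset Strict Implicit. Unset Printing Implicit Defensive.
Import Order.TTheory GRing.Theory Num.Theory.
Local Open Scope ring_scope.

Section Defs.
Variable R : realType.
Variable n : nat.
Local Notation C := R[i].

Definition cmod (c : C) : R := Num.sqrt (complex.Re c ^+ 2 + complex.Im c ^+ 2).

Definition adjmx m p (A : 'M[C]_(m, p)) : 'M[C]_(p, m) := (map_mx (@conjc R) A)^T.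

Definition is_hermitian (W : 'M[C]_n) : Prop := adjmx W = W.

Definition l2norm (v : 'cV[C]_n) : R := Num.sqrt (\sum_i cmod (v i 0) ^+ 2).

Definition dotc (u v : 'cV[C]_n) : C := (adjmx u *m v) 0 0.

Definition unit_modulus (z : 'cV[C]_n) : Prop := forall i, cmod (z i 0) = 1.

Definition opnorm_le (W : 'M[C]_n) (b : R) : Prop :=
  forall v : 'cV[C]_n, l2norm (W *m v) <= b * l2norm v.

Definition infnorm_le (v : 'cV[C]_n) (b : R) : Prop := forall i, cmod (v i 0) <= b.

Definition discordant (z : 'cV[C]_n) (W : 'M[C]_n) : Prop :=
  opnorm_le W (3 * Num.sqrt (n%:R)) /\
  infnorm_le (W *m z) (3 * Num.sqrt (n%:R * ln (n%:R))).

Definition measC (z : 'cV[C]_n) (sigma : R) (W : 'M[C]_n) : 'M[C]_n :=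
  z *m adjmx z + (real_complex R sigma) *: W.

End Defs.

Definition alpha (R : realType) (t : R) (k : nat) : R :=
  iter k (fun a => 6 + (t / 2) ^+ 2 * a ^+ 3) 12.

Definition seq_cvg_to (R : realType) (a : nat -> R) (L : R) : Prop :=
  forall e : R, 0 < e -> exists N : nat, forall k : nat, (N <= k)%N -> `|a k - L| < e.

(* Main.v *)
Require Import Defs.
From HB Require Import structures.
From mathcomp Require Import all_boot all_order all_algebra.
From mathcomp Require Import complex.
From mathcomp Require Import reals exp.
From mathcomp Require Import classical_sets.
From mathcomp Require Import ring lra.
Import Order.TTheory GRing.Theory Num.Theory.
Local Open Scope ring_scope.
Set Implicit Arguments. Unset Strict Implicit. Unset Printing Implicit Defensive.
Local Open Scope ring_scope.
Lemma decr_cvg (R : realType) (a : nat -> R) (lb : R) :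
  (forall k, a k.+1 <= a k) -> (forall k, lb <= a k) ->
  exists L, seq_cvg_to a L /\ forall k, L <= a k.
Proof.
move=> dec lbk.
set E := range a.
have hE : has_inf E.
  split; first by exists (a 0%N); exists 0%N.
  by exists lb => y [k _ <-].
have Lk : forall k, inf E <= a k.
  by move=> k; apply: (ge_inf hE.2); exists k.
exists (inf E); split => // e e0.
have [y [N _ <-] yl] := inf_adherent e0 hE.
exists N => k Nk.
have akN : a k <= a N.
  elim: k Nk => [|k IH]; first by rewrite leqn0 => /eqP ->.
  rewrite leq_eqVlt => /orP [/eqP <- //| ].
  rewrite ltnS => /IH h; exact: le_trans (dec k) h.
have := Lk k.
rewrite ger0_norm ?subr_ge0 //; lra.
Qed.
Lemma core1 (R : realType) (N q d s sig rN : R) : 0 <= q -> 0 <= d -> 0 <= s -> 0 <= sig -> 0 <= rN ->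
  rN^+2 = N -> d^+2 = 2*N-2*q -> s^+2 = 2*N+2*q -> d*s <= 12*sig*rN -> d <= 12*sig.
Proof.
move=> q0 d0 s0 g0 r0 hN hd hs hds.
have srN : rN <= s by nra.
have [rz|rp] := eqVneq rN 0.
  subst rN. have : d^+2 <= 0 by nra. nra.
have rp' : 0 < rN by rewrite lt_neqAle eq_sym rp.
nra.
Qed.

Lemma core2 (R : realType) (N q d s sig rN t a : R) : 0 <= q -> 0 <= d -> 0 <= s -> 0 <= sig -> 0 <= rN ->
  rN^+2 = N -> d^+2 = 2*N-2*q -> s^+2 = 2*N+2*q -> d*s <= 12*sig*rN ->
  0 <= t -> sig <= t * rN -> 0 <= a -> d <= a * sig -> d <= (6 + (t/2)^+2 * a^+3) * sig.
Proof.
move=> q0 d0 s0 g0 r0 hN hd hs hds t0 st a0 da.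
have s2 : s <= 2 * rN by nra.
have h1 : d * s^+2 <= 24 * sig * N.
  have : d * s * s <= 12 * sig * rN * s by nra.
  have : 12 * sig * rN * s <= 24 * sig * N.
    have : 0 <= 12 * sig * rN by apply: mulr_ge0 => //; lra.
    rewrite -hN; nra.
  nra.
have h2 : 4 * N * d <= 24 * sig * N + d^+3 by nra.
have sg2 : sig^+2 <= t^+2 * N by nra.
have h3 : d^+3 <= a^+3 * sig^+3.
  rewrite -exprMn; apply: lerXn2r => //; rewrite ?nnegrE //; nra.
have h4 : a^+3 * sig^+3 <= a^+3 * sig * (t^+2 * N).
  have : 0 <= a^+3 * sig by apply: mulr_ge0 => //; apply: exprn_ge0.
  nra.
have [Nz|Np] := eqVneq N 0.
  have : d^+2 <= 0 by nra.
  have : 0 <= (t/2)^+2 * a^+3 by apply: mulr_ge0; [exact: sqr_ge0 | exact: exprn_ge0].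
  move=> hc hd2; have -> : d = 0 by nra.
  apply: mulr_ge0 => //; lra.
have Np' : 0 < N by rewrite lt_neqAle eq_sym Np -hN exprn_ge0.
have : 4 * N * d <= 4 * N * ((6 + (t/2)^+2 * a^+3) * sig).
  have -> : 4 * N * ((6 + (t / 2) ^+ 2 * a ^+ 3) * sig) = 24 * sig * N + a^+3 * sig * (t^+2 * N).
    by field.
  lra.
move=> h; rewrite -(@ler_pM2l _ (4 * N)); lra.
Qed.
Lemma alphaS {R : realType} (t : R) k : alpha t k.+1 = 6 + (t/2)^+2 * alpha t k ^+ 3.
Proof. by rewrite /alpha iterS. Qed.

Lemma alpha_ge6 {R : realType} (t : R) k : 6 <= alpha t k.
Proof.
elim: k => [|k IH]; first by rewrite /alpha /=; lra.
rewrite alphaS.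
have : 0 <= (t/2)^+2 * alpha t k ^+ 3.
  by apply: mulr_ge0; [exact: sqr_ge0 | apply: exprn_ge0; lra].
lra.
Qed.

Lemma fmono {R : realType} {c a b : R} : 0 <= c -> 0 <= a -> a <= b -> 6 + c * a^+3 <= 6 + c * b^+3.
Proof.
move=> c0 a0 ab; rewrite lerD2l; apply: ler_wpM2l => //.
by apply: lerXn2r => //; rewrite nnegrE //; lra.
Qed.

Lemma alpha_decr {R : realType} (t : R) : 72 * t^+2 < 1 -> forall k, alpha t k.+1 <= alpha t k.
Proof.
move=> ht; elim => [|k IH].
  rewrite alphaS /alpha /=.
  have -> : (t / 2) ^+ 2 * 12 ^+ 3 = 432 * t^+2 by field.
  lra.
rewrite [alpha t k.+2]alphaS [alpha t k.+1]alphaS.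
apply: fmono => //; first exact: sqr_ge0.
rewrite -alphaS; have := alpha_ge6 t k.+1; lra.
Qed.

Lemma part5 {R : realType} : alpha (1/12 : R) 5 <= 13/2.
Proof.
have c0 : 0 <= ((1/12 : R)/2)^+2 by exact: sqr_ge0.
have c576 : ((1/12 : R)/2)^+2 = 1/576 by field.
have e1 : alpha (1/12 : R) 1 = 9 by rewrite /alpha /=; field.
have e2 : alpha (1/12 : R) 2 <= 15/2.
  rewrite alphaS e1.
  have -> : ((1/12 : R)/2)^+2 * 9^+3 = 729/576 by field.
  lra.
have e3 : alpha (1/12 : R) 3 <= 27/4.
  rewrite alphaS.  apply: le_trans (fmono c0 _ e2) _; first by have := alpha_ge6 (1/12 : R) 2; lra.
  rewrite c576.
  lra.
have e4 : alpha (1/12 : R) 4 <= 33/5.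
  rewrite alphaS; apply: le_trans (fmono c0 _ e3) _; first by have := alpha_ge6 (1/12 : R) 3; lra.
  rewrite c576.
  lra.
rewrite alphaS; apply: le_trans (fmono c0 _ e4) _; first by have := alpha_ge6 (1/12 : R) 4; lra.
rewrite c576.
lra.
Qed.
Section LA.
Variable R : realType.
Variable n : nat.
Local Notation C := R[i].
Implicit Types u v w z : 'cV[C]_n.

Lemma ReD (a b : C) : complex.Re (a + b) = complex.Re a + complex.Re b. Proof. by case: a => ? ?; case: b => ? ? /=; reflexivity. Qed.
Lemma ImD (a b : C) : complex.Im (a + b) = complex.Im a + complex.Im b. Proof. by case: a => ? ?; case: b => ? ? /=; reflexivity. Qed.
Lemma ReN (a : C) : complex.Re (- a) = - complex.Re a. Proof. by case: a => ? ? /=; reflexivity. Qed.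
Lemma ImN (a : C) : complex.Im (- a) = - complex.Im a. Proof. by case: a => ? ? /=; reflexivity. Qed.
Lemma Re_conjM (a b : C) : complex.Re (conjc a * b) = complex.Re a * complex.Re b + complex.Im a * complex.Im b.
Proof. case: a => a1 a2; case: b => b1 b2 /=; ring. Qed.
Lemma Re_rM (r : R) (a : C) : complex.Re (real_complex R r * a) = r * complex.Re a.
Proof. case: a => a1 a2 /=; ring. Qed.
Lemma Re_conj (a : C) : complex.Re (conjc a) = complex.Re a. Proof. by case: a => ? ? /=; reflexivity. Qed.

Lemma Re_sum (I : finType) (F : I -> C) : complex.Re (\sum_i F i) = \sum_i complex.Re (F i).
Proof. by apply: (big_morph _ ReD). Qed.

Lemma dotcE (u v : 'cV[C]_n) : dotc u v = \sum_i conjc (u i 0) * v i 0.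
Proof. by rewrite /dotc mxE; apply: eq_bigr => i _; rewrite /adjmx !mxE. Qed.

Definition rd (u v : 'cV[C]_n) : R := complex.Re (dotc u v).

Lemma rdE u v : rd u v = \sum_i (complex.Re (u i 0) * complex.Re (v i 0) + complex.Im (u i 0) * complex.Im (v i 0)).
Proof. by rewrite /rd dotcE Re_sum; apply: eq_bigr => i _; rewrite Re_conjM. Qed.

Lemma rdDl u v w : rd (u + v) w = rd u w + rd v w.
Proof. rewrite !rdE -big_split /=; apply: eq_bigr => i _; rewrite !mxE ReD ImD; ring. Qed.
Lemma rdDr u v w : rd w (u + v) = rd w u + rd w v.
Proof. rewrite !rdE -big_split /=; apply: eq_bigr => i _; rewrite !mxE ReD ImD; ring. Qed.
Lemma rdNl u w : rd (- u) w = - rd u w.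
Proof. rewrite !rdE -sumrN /=; apply: eq_bigr => i _; rewrite !mxE ReN ImN; ring. Qed.
Lemma rdC u v : rd u v = rd v u.
Proof. rewrite !rdE; apply: eq_bigr => i _; ring. Qed.

Lemma cmod2 (c : C) : cmod c ^+ 2 = complex.Re c ^+ 2 + complex.Im c ^+ 2.
Proof. by rewrite /cmod sqr_sqrtr // addr_ge0 // sqr_ge0. Qed.

Lemma rd_ge0 u : 0 <= rd u u.
Proof. rewrite rdE; apply: sumr_ge0 => i _; rewrite -!expr2; apply: addr_ge0; exact: sqr_ge0. Qed.

Lemma l2normE u : l2norm u = Num.sqrt (rd u u).
Proof. by rewrite /l2norm rdE; congr Num.sqrt; apply: eq_bigr => i _; rewrite cmod2 !expr2. Qed.

Lemma l2norm2 u : l2norm u ^+ 2 = rd u u.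
Proof. by rewrite l2normE sqr_sqrtr // rd_ge0. Qed.

Lemma adjmxM m p r (A : 'M[C]_(m, p)) (B : 'M[C]_(p, r)) :
  adjmx (A *m B) = adjmx B *m adjmx A.
Proof. by rewrite /adjmx map_mxM trmx_mul. Qed.

Lemma dotc_conj u v : dotc u v = conjc (dotc v u).
Proof.
rewrite !dotcE rmorph_sum; apply: eq_bigr => i _.
by rewrite rmorphM /= conjcK mulrC. Qed.

Lemma dotc_herm (W : 'M[C]_n) u v : is_hermitian W -> dotc u (W *m v) = dotc (W *m u) v.
Proof. by move=> hW; rewrite /dotc adjmxM hW mulmxA. Qed.

Lemma dotc_self u : dotc u u = real_complex R (rd u u).
Proof.
rewrite dotcE rdE rmorph_sum; apply: eq_bigr => i _.
case: (u i 0) => a b; apply/eqP; rewrite eq_complex /=; apply/andP; split; apply/eqP; ring.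
Qed.

Lemma dotc_meas z sig W u v :
  dotc u (measC z sig W *m v) = dotc u z * dotc z v + real_complex R sig * dotc u (W *m v).
Proof.
rewrite /dotc /measC mulmxDl mulmxDr -scalemxAl -scalemxAr -[z *m _ *m v]mulmxA.
rewrite [adjmx u *m (z *m _)]mulmxA.
set A := adjmx u *m z; set B := adjmx z *m v; set D := adjmx u *m (W *m v).
by rewrite !mxE big_ord1 /A /B !mxE.
Qed.

End LA.
Lemma cs_gen {R : realType} (I : finType) (x1 x2 y1 y2 : I -> R) :
  \sum_i (x1 i * y1 i + x2 i * y2 i) <=
  Num.sqrt (\sum_i (x1 i * x1 i + x2 i * x2 i)) * Num.sqrt (\sum_i (y1 i * y1 i + y2 i * y2 i)).
Proof.
set b := \sum_i (x1 i * y1 i + x2 i * y2 i).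
set a := \sum_i (x1 i * x1 i + x2 i * x2 i).
set c := \sum_i (y1 i * y1 i + y2 i * y2 i).
have q : forall l, 0 <= a - 2 * l * b + l ^+ 2 * c.
  move=> l.
  have -> : a - 2 * l * b + l ^+ 2 * c =
      \sum_i ((x1 i - l * y1 i) ^+ 2 + (x2 i - l * y2 i) ^+ 2).
    rewrite (eq_bigr (fun i => (x1 i * x1 i + x2 i * x2 i) - (2 * l) * (x1 i * y1 i + x2 i * y2 i)
       + l ^+ 2 * (y1 i * y1 i + y2 i * y2 i))); last by move=> i _; ring.
    by rewrite big_split /= sumrB -!mulr_sumr.
  by apply: sumr_ge0 => i _; apply: addr_ge0; apply: sqr_ge0.
have a0 : 0 <= a by apply: sumr_ge0 => i _; rewrite -!expr2; apply: addr_ge0; apply: sqr_ge0.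
have c0 : 0 <= c by apply: sumr_ge0 => i _; rewrite -!expr2; apply: addr_ge0; apply: sqr_ge0.
have sa := sqrtr_ge0 a; have sc := sqrtr_ge0 c.
have sa2 : Num.sqrt a ^+ 2 = a by rewrite sqr_sqrtr.
have sc2 : Num.sqrt c ^+ 2 = c by rewrite sqr_sqrtr.
have [cz|cp] := eqVneq c 0.
  have [bp|bn] := ltP 0 b.
    have := q ((a + 1) / (2 * b)).
    rewrite cz mulr0 addr0.
    have -> : 2 * ((a + 1) / (2 * b)) * b = a + 1 by field; lra.
    lra.
  have : 0 <= Num.sqrt a * Num.sqrt c by apply: mulr_ge0.
  lra.
have cp' : 0 < c by rewrite lt_neqAle eq_sym cp.
have := q (b / c).
have -> : a - 2 * (b / c) * b + (b / c) ^+ 2 * c = (a * c - b ^+ 2) / c by field; lra.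
rewrite pmulr_lge0 ?invr_gt0 // => h.
have hp : 0 <= Num.sqrt a * Num.sqrt c by apply: mulr_ge0.
have : b ^+ 2 <= (Num.sqrt a * Num.sqrt c) ^+ 2 by rewrite exprMn sa2 sc2; lra.
nra.
Qed.

Lemma rd_cs {R : realType} {n} (u v : 'cV[R[i]]_n) : rd u v <= l2norm u * l2norm v.
Proof. rewrite rdE !l2normE !rdE; exact: cs_gen. Qed.

Lemma rdNr {R : realType} {n} (u v : 'cV[R[i]]_n) : rd u (- v) = - rd u v.
Proof. by rewrite rdC rdNl rdC. Qed.

Theorem mainTheorem8 (R : realType) (n : nat) (z x : 'cV[R[i]]_n)
    (W : 'M[R[i]]_n) (sigma : R) :
  unit_modulus z ->
  is_hermitian W ->
  discordant z W ->
  0 <= sigma ->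
  l2norm x ^+ 2 = n%:R ->
  dotc z (measC z sigma W *m z) <= dotc x (measC z sigma W *m x) ->
  dotc z x = real_complex R (cmod (dotc z x)) ->
  [/\ l2norm (x - z) <= 12 * sigma,
      (forall t : R, 0 <= t -> sigma <= t * Num.sqrt (n%:R) ->
         forall k : nat, l2norm (x - z) <= alpha t k * sigma),
      (forall t : R, 0 <= t -> t < 1 / (6 * Num.sqrt 2) ->
         exists L : R, seq_cvg_to (alpha t) L),
      (forall e : R, 0 < e -> exists t0 : R, 0 < t0 /\
         forall t : R, 0 <= t -> t <= t0 ->
           exists L : R, seq_cvg_to (alpha t) L /\ L <= 6 + e)
    & (sigma <= Num.sqrt (n%:R) / 12 -> l2norm (x - z) <= (13 / 2) * sigma)].
Proof.
move=> hz hW [hop _] sg0 hx hle hp.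
set N : R := n%:R.
have N0 : 0 <= N by rewrite /N ler0n.
set q := cmod (dotc z x).
have q0 : 0 <= q by exact: sqrtr_ge0.
have rzx : rd z x = q by rewrite /rd hp.
have rxz : rd x z = q by rewrite rdC.
have rxx : rd x x = N by rewrite -l2norm2 hx.
have rzz : rd z z = N.
  rewrite rdE (eq_bigr (fun _ => 1)); last first.
    move=> i _; have := hz i => /(congr1 (fun r => r ^+ 2)).
    by rewrite cmod2 expr1n !expr2.
  by rewrite sumr_const card_ord.
have dxz : dotc x z = real_complex R q by rewrite dotc_conj hp conjc_real.
have dzz : dotc z z = real_complex R N by rewrite dotc_self rzz.
rewrite !dotc_meas dxz hp dzz lecE in hle.
move/andP: hle => [_ hre].
rewrite !ReD !Re_rM /= in hre.
change (complex.Re (dotc z (W *m z))) with (rd z (W *m z)) in hre.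
change (complex.Re (dotc x (W *m x))) with (rd x (W *m x)) in hre.
rewrite -/q in hre.
have hsym : rd x (W *m z) = rd z (W *m x).
  by rewrite /rd dotc_herm // dotc_conj Re_conj.
have key : rd (x - z) (W *m (x + z)) = rd x (W *m x) - rd z (W *m z).
  rewrite mulmxDr rdDr !rdDl !rdNl hsym; ring.
set d := l2norm (x - z); set s := l2norm (x + z).
have d0 : 0 <= d by exact: sqrtr_ge0.
have s0 : 0 <= s by exact: sqrtr_ge0.
have hd : d ^+ 2 = 2 * N - 2 * q.
  by rewrite /d l2norm2 rdDl !rdDr !rdNr !rdNl rxx rxz rzx rzz; ring.
have hs : s ^+ 2 = 2 * N + 2 * q.
  by rewrite /s l2norm2 rdDl !rdDr rxx rxz rzx rzz; ring.
set rN := Num.sqrt N.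
have rN0 : 0 <= rN by exact: sqrtr_ge0.
have hN : rN ^+ 2 = N by rewrite sqr_sqrtr.
have cs : rd (x - z) (W *m (x + z)) <= d * (3 * rN * s).
  apply: le_trans (rd_cs _ _) _.
  by apply: ler_wpM2l => //; exact: hop.
have hds : d * s <= 12 * sigma * rN.
  have h1 : N ^+ 2 - q ^+ 2 <= sigma * (d * (3 * rN * s)).
    have : sigma * (rd x (W *m x) - rd z (W *m z)) <= sigma * (d * (3 * rN * s)).
      by rewrite -key; apply: ler_wpM2l.
    rewrite !expr2; lra.
  have h3 : N ^+ 2 - q ^+ 2 = (d * s) ^+ 2 / 4.
    by rewrite exprMn hd hs; field.
  rewrite h3 in h1.
  have : 0 <= d * s by apply: mulr_ge0.
  have : 0 <= 12 * sigma * rN by apply: mulr_ge0 => //; lra.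
  nra.
have P1 : d <= 12 * sigma by apply: (core1 q0 d0 s0 sg0 rN0 hN hd hs hds).
have P2 : forall t : R, 0 <= t -> sigma <= t * rN -> forall k, d <= alpha t k * sigma.
  move=> t t0 st; elim => [|k IH]; first exact: P1.
  rewrite alphaS; apply: (core2 q0 d0 s0 sg0 rN0 hN hd hs hds t0 st) => //.
  by have := alpha_ge6 t k; lra.
have P3 : forall t : R, 0 <= t -> 72 * t ^+ 2 < 1 ->
    exists L : R, seq_cvg_to (alpha t) L /\ forall k, L <= alpha t k.
  move=> t t0 ht; apply: (@decr_cvg _ _ 6); first exact: alpha_decr.
  exact: alpha_ge6.
split => //.
- move=> t t0 ht.
  have s2p : 0 < Num.sqrt (2 : R) by rewrite sqrtr_gt0.
  have s22 : Num.sqrt (2 : R) ^+ 2 = 2 by rewrite sqr_sqrtr.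
  have : t * (6 * Num.sqrt 2) < 1.
    by rewrite -ltr_pdivlMr ?mulr_gt0 //.
  move=> h; suff ht2 : 72 * t ^+ 2 < 1 by have [L [hL _]] := P3 t t0 ht2; exists L.
  have : (t * (6 * Num.sqrt 2)) ^+ 2 < 1.
    have : 0 <= t * (6 * Num.sqrt 2) by apply: mulr_ge0 => //; apply: mulr_ge0 => //; lra.
    nra.
  rewrite exprMn exprMn s22; lra.
- move=> e e0.
  exists (Num.min (1/9) (e/432)); split.
    by rewrite lt_min; apply/andP; split; [lra | apply: divr_gt0 => //; lra].
  move=> t t0; rewrite le_min => /andP [h9 he].
  have [L [hL hLk]] := P3 t t0 (ltac:(nra)).
  exists L; split => //.
  apply: le_trans (hLk 1%N) _.
  have -> : alpha t 1 = 6 + 432 * t ^+ 2 by rewrite /alpha /=; field.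
  have : t <= e / 432 by [].
  nra.
- move=> hs12.
  apply: le_trans (P2 (1/12) _ _ 5%N) _.
  + lra.
  + by apply: le_trans hs12 _; rewrite mulrC mul1r.
  + apply: ler_wpM2r => //; exact: part5.
Qed.
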